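(* Let $n\ge 3$. Every $\sigma\in\mathcal{S}_n^{1\prec n}(1324)$ that is not a primitive (i.e. $\sigma\notin\mathcal{S}_{n,1}^{1\prec n}(1324)$) admits a unique decomposition $\sigma=\sigma_1\odot\sigma_2$ where $\sigma_1\in\mathcal{S}_{m,1}^{1\prec m}(1324)$ is a primitive for some $m\ge2$ and $\sigma_2\in\mathcal{S}_\ell^{1\prec\ell}(1324)$ with $\ell=n-m+1$.
   Context: $\mathcal{S}_n(1324)$ denotes the set of permutations of $\{1,\dots,n\}$ (in one-line notation) avoiding the pattern $1324$. For $a,k\ge1$, $\mathcal{S}_{n,k}^{a\prec n}(1324)$ is the set of $\sigma\in\mathcal{S}_n(1324)$ with $\sigma^{-1}(n)-\sigma^{-1}(a)=k$ and $\sigma^{-1}(b)>\sigma^{-1}(n)$ for all $b\in\{1,\dots,a-1\}$, and $\mathcal{S}_n^{a\prec n}(1324)=\bigcup_{k\ge1}\mathcal{S}_{n,k}^{a\prec n}(1324)$. Elements of $\mathcal{S}_{m,1}^{1\prec m}(1324)$ are called primitives; such a permutation has the form $\sigma_1=\pi_1\,1\,m\,\tau_1$. Given a primitive $\sigma_1=\pi_1\,1\,m\,\tau_1$ of size $m$ and $\sigma_2\in\mathcal{S}_\ell(1324)$ of the form $\sigma_2=\pi_2\,1\,\theta_2\,\ell\,\tau_2$ (words possibly empty), the product is $\sigma_1\odot\sigma_2=\widehat{\pi}_2\,\pi_1\,1\,m\,\widehat{\theta}_2\,n\,\widehat{\tau}_2\,\tau_1$, where $n=\ell+m-1$ and hats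 denote adding $m-1$ to each entry. *)

(* Defs.v *)
(* Permutations in one-line notation are sequences of nats. *)
From mathcomp Require Import all_boot.
Set Implicit Arguments. Unset Strict Implicit. Unset Printing Implicit Defensive.

Definition is_perm (n : nat) (s : seq nat) : Prop := perm_eq s (iota 1 n).

Definition contains1324 (s : seq nat) : Prop :=
  exists i j k l, [/\ i < j, j < k, k < l & l < size s] /\
    [/\ nth 0 s i < nth 0 s k, nth 0 s k < nth 0 s j & nth 0 s j < nth 0 s l].

Definition S1324 (n : nat) (s : seq nat) : Prop :=
  is_perm n s /\ ~ contains1324 s.

(* positions are 0-based: index x s = sigma^{-1}(x) - 1 *)
Definition Sprec_k (a n k : nat) (s : seq nat) : Prop :=
  [/\ S1324 n s,
      index a s < index n s,
      index n s - index a s = k &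
      forall b, 1 <= b < a -> index n s < index b s].

Definition Sprec (a n : nat) (s : seq nat) : Prop :=
  exists k, 1 <= k /\ Sprec_k a n k s.

Definition primitive (m : nat) (s : seq nat) : Prop := Sprec_k 1 m 1 s.

(* The product sigma1 (.) sigma2, for sigma1 = pi1 1 m tau1 (m = size sigma1)
   and sigma2 = pi2 1 theta2 l tau2 (l = size sigma2):
   hat(pi2) pi1 1 m hat(theta2) n hat(tau2) tau1, n = l+m-1,
   hat = add m-1 to every entry. *)
Definition odot (s1 s2 : seq nat) : seq nat :=
  let m := size s1 in
  let l := size s2 in
  let n := l + m - 1 in
  let i1 := index 1 s1 in
  let pi1 := take i1 s1 in
  let tau1 := drop i1.+2 s1 in
  let j1 := index 1 s2 in
  let jl := index l s2 in
  let pi2 := take j1 s2 in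
  let theta2 := take (jl - j1.+1) (drop j1.+1 s2) in
  let tau2 := drop jl.+1 s2 in
  let hat := map (fun x => x + (m - 1)) in
  hat pi2 ++ pi1 ++ [:: 1; m] ++ hat theta2 ++ [:: n] ++ hat tau2 ++ tau1.

(* Main.v *)
Require Import Defs.
From mathcomp Require Import all_boot zify.
Set Implicit Arguments. Unset Strict Implicit.

Definition C4 (s : seq nat) := exists a b c d,
  subseq [:: a; b; c; d] s /\ [/\ a < c, c < b & b < d].

Lemma subseq_nth_cons s i u : i < size s -> subseq u (drop i.+1 s) ->
  subseq (nth 0 s i :: u) s.
Proof.
move=> Hi Hu. have E := cat_take_drop i s. rewrite (drop_nth 0 Hi) in E.
rewrite -[X in subseq _ X]E.
apply: subseq_trans (suffix_subseq (take i s) _). by rewrite /= eqxx.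
Qed.

Lemma step_sub s i j u : i < j -> j < size s -> subseq u (drop j.+1 s) ->
  subseq (nth 0 s j :: u) (drop i.+1 s).
Proof.
move=> ij js H.
have E: nth 0 s j = nth 0 (drop i.+1 s) (j - i.+1) by rewrite nth_drop subnKC.
rewrite E; apply: subseq_nth_cons; first by rewrite size_drop; lia.
rewrite drop_drop. have ->: (j - i.+1).+1 + i.+1 = j.+1 by lia. done.
Qed.

Lemma nth_of_subseq x u s : subseq (x :: u) s ->
  exists i, [/\ i < size s, nth 0 s i = x & subseq u (drop i.+1 s)].
Proof.
elim: s => [|y s IH] //=. case: eqP => [->|_] H.
  by exists 0; rewrite drop0.
have [i [H1 H2 H3]] := IH H. by exists i.+1.
Qed.

Lemma nth_of_subseq_drop x u s p : subseq (x :: u) (drop p s) ->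
  exists i, [/\ p <= i, i < size s, nth 0 s i = x & subseq u (drop i.+1 s)].
Proof.
move=> /nth_of_subseq [i [H1 H2 H3]]. exists (p + i). split.
- lia.
- rewrite size_drop in H1; lia.
- by rewrite -nth_drop.
- by move: H3; rewrite drop_drop addSn addnC.
Qed.

Lemma containsE s : contains1324 s <-> C4 s.
Proof.
split.
- move=> [i [j [k [l [[ij jk kl ls] [H1 H2 H3]]]]]].
  exists (nth 0 s i), (nth 0 s j), (nth 0 s k), (nth 0 s l); split => //.
  have Z : forall x, x < size s -> x < size s by [].
  apply: subseq_nth_cons; first by move: ls; set L := size s; lia.
  apply: step_sub; try by move: ls; set L := size s; lia.
  apply: step_sub; try by move: ls; set L := size s; lia.
  apply: step_sub; try by move: ls; set L := size s; lia.
  exact: sub0seq.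
- move=> [a [b [c [d [H [H1 H2 H3]]]]]].
  have {}H : subseq [:: a; b; c; d] (drop 0 s) by rewrite drop0.
  have [i [_ Hi Ei H']] := nth_of_subseq_drop H.
  have [j [ij Hj Ej H'']] := nth_of_subseq_drop H'.
  have [k [jk Hk Ek H''']] := nth_of_subseq_drop H''.
  have [l [kl Hl El _]] := nth_of_subseq_drop H'''.
  exists i, j, k, l; split; first by split; move: Hl; set L := size s; lia.
  by rewrite Ei Ej Ek El.
Qed.

Lemma subseq_map_inv (f : nat -> nat) u t : subseq u (map f t) ->
  exists v, subseq v t /\ u = map f v.
Proof.
elim: t u => [|y t IH] u /=.
  by move=> /eqP ->; exists [::].
case: u => [|x u]. by exists [::]; split; rewrite ?sub0seq.
case: eqP => [->|_] H.
  have [v [Hv ->]] := IH _ H. exists (y :: v); by rewrite /= eqxx.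
have [v [Hv E]] := IH _ H. exists v; split => //.
exact: subseq_trans Hv (subseq_cons _ _).
Qed.

Lemma filter_all' (P : pred nat) (l : seq nat) :
  (forall x, x \in l -> P x) -> filter P l = l.
Proof. by move=> H; apply/all_filterP/allP. Qed.

Lemma filter_none (P : pred nat) (l : seq nat) :
  (forall x, x \in l -> ~~ P x) -> filter P l = [::].
Proof.
elim: l => //= x l IH H.
rewrite (negbTE (H x (mem_head _ _))) IH // => y yl; apply: H.
by rewrite in_cons yl orbT.
Qed.

Lemma filter_map_none (P : pred nat) (f : nat -> nat) (L : seq nat) :
  (forall y, y \in L -> ~~ P (f y)) -> filter P (map f L) = [::].
Proof. by move=> H; rewrite filter_map filter_none. Qed.

Lemma filter_map_all (P : pred nat) (f : nat -> nat) (L : seq nat) :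
  (forall y, y \in L -> P (f y)) -> filter P (map f L) = map f L.
Proof. by move=> H; rewrite filter_map filter_all'. Qed.

Lemma notin_map (f : nat -> nat) (L : seq nat) x :
  (forall y, y \in L -> f y != x) -> x \notin map f L.
Proof.
move=> H; apply/mapP => [[y yL E]]. by move: (H y yL); rewrite E eqxx.
Qed.

Lemma notin_pre (a r : seq nat) x : uniq (a ++ x :: r) -> x \notin a.
Proof.
rewrite cat_uniq => /and3P[_ /hasPn H _]; apply/negP => xa.
by move: (H x (mem_head _ _)); rewrite /= xa.
Qed.

Lemma notin_post (a r : seq nat) x : uniq (a ++ x :: r) -> x \notin r.
Proof. by rewrite cat_uniq => /and3P[_ _ /= /andP[]]. Qed.

Lemma sub2 (u v : nat) (l r : seq nat) : u \in l -> v \in r ->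
  subseq [:: u; v] (l ++ r).
Proof.
move=> ul vr. rewrite -cat1s; apply: cat_subseq; by rewrite sub1seq.
Qed.

Lemma sub4 (u v w z : nat) (l1 l2 l3 l4 : seq nat) :
  u \in l1 -> v \in l2 -> w \in l3 -> z \in l4 ->
  subseq [:: u; v; w; z] (l1 ++ l2 ++ l3 ++ l4).
Proof.
move=> H1 H2 H3 H4. rewrite -cat1s; apply: cat_subseq; first by rewrite sub1seq.
rewrite -cat1s; apply: cat_subseq; first by rewrite sub1seq.
exact: sub2.
Qed.

Lemma uniq_neq (u v : nat) (s : seq nat) : subseq [:: u; v] s -> uniq s -> u != v.
Proof. move=> H U; have := subseq_uniq H U. by rewrite /= in_cons orbF => /andP[]. Qed.

Lemma split_idx (x : nat) (s : seq nat) : x \in s ->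
  s = take (index x s) s ++ x :: drop (index x s).+1 s /\
  size (take (index x s) s) = index x s.
Proof.
move=> xs. have Hi : index x s < size s by rewrite index_mem.
split; last by rewrite size_take Hi.
have E := cat_take_drop (index x s) s. rewrite (drop_nth 0 Hi) nth_index // in E.
Qed.

Lemma decomp (s : seq nat) x y : x \in s -> y \in s -> index x s < index y s ->
  exists a b c, s = a ++ x :: b ++ y :: c /\ index y s - index x s = (size b).+1.
Proof.
move=> xs ys lt.
have [Ex Sa] := split_idx xs.
move: Ex Sa. set a := take _ s. set r := drop _ s. move=> Ex Sa.
have ya : y \notin a.
  apply/negP => ya. move: lt; rewrite {2}Ex index_cat ya.
  have : index y a < size a by rewrite index_mem.
  rewrite Sa. lia.
have xy : x != y. apply/negP => /eqP E. by move: lt; rewrite E ltnn.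
have yr : y \in r. move: ys; by rewrite {1}Ex mem_cat (negbTE ya) in_cons eq_sym (negbTE xy).
have [Ey Sb] := split_idx yr.
exists a, (take (index y r) r), (drop (index y r).+1 r); split.
  by rewrite -Ey.
rewrite {1}Ex index_cat (negbTE ya) /= (negbTE xy) Sb Sa. lia.
Qed.

Lemma drop_cat_after (a r : seq nat) k : drop (size a + k) (a ++ r) = drop k r.
Proof. by rewrite drop_cat ltnNge leq_addr /= addKn. Qed.

Lemma idx1 (a r : seq nat) : 1 \notin a -> index 1 (a ++ 1 :: r) = size a.
Proof. by move=> H; rewrite index_cat (negbTE H) /= ?eqxx ?addn0. Qed.

Lemma idxm (a c : seq nat) m : m \notin a -> m != 1 ->
  index m (a ++ 1 :: m :: c) = (size a).+1.
Proof.
move=> H H1; rewrite index_cat (negbTE H) /= eq_sym (negbTE H1) eqxx. lia.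
Qed.

Lemma idxl (b th t : seq nat) l : l \notin b -> l != 1 -> l \notin th ->
  index l (b ++ 1 :: th ++ l :: t) = size b + (size th).+1.
Proof.
move=> H1 H2 H3; rewrite index_cat (negbTE H1) /= eq_sym (negbTE H2).
by rewrite index_cat (negbTE H3) /= ?eqxx ?addn0.
Qed.

Definition hat (m : nat) := map (fun x => x + (m - 1)).

Lemma odot_explicit (a c : seq nat) m (b th t : seq nat) l :
  size (a ++ 1 :: m :: c) = m -> 1 \notin a ->
  size (b ++ 1 :: th ++ l :: t) = l -> 1 \notin b -> l \notin b -> l != 1 ->
  l \notin th ->
  odot (a ++ 1 :: m :: c) (b ++ 1 :: th ++ l :: t) =
  hat m b ++ a ++ [:: 1; m] ++ hat m th ++ [:: l + m - 1] ++ hat m t ++ c.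
Proof.
move=> Sm Ha Sl Hb Hlb Hl1 Hlth.
rewrite /odot Sm Sl (idx1 _ Ha) (idx1 _ Hb) (@idxl b th t l Hlb Hl1 Hlth).
rewrite (take_size_cat _ (erefl _)).
have -> : (size a).+2 = size a + 2 by lia.
rewrite drop_cat_after /=.
have -> : (size b).+1 = size b + 1 by lia.
rewrite drop_cat_after /=.
have -> : size b + (size th).+1 - (size b + 1) = size th by lia.
rewrite (take_size_cat _ (erefl _)).
have -> : (size b + (size th).+1).+1 = size b + (size th + 2) by lia.
rewrite drop_cat_after /= !drop0 (take_size_cat _ (erefl _)).
have -> : size th + 2 = (size th + 1).+1 by lia.
by rewrite /= drop_cat_after /= drop0.
Qed.

Lemma split_hl m (l : seq nat) : m \notin l ->
  (forall y z, subseq [:: y; z] l -> ~~ ((y < m) && (m < z))) ->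
  l = filter (fun x => m < x) l ++ filter (fun x => x < m) l.
Proof.
elim: l => [|x l IH] // Hm H.
rewrite in_cons negb_or in Hm; case/andP: Hm => xm Hm'.
have H' : forall y z, subseq [:: y; z] l -> ~~ ((y < m) && (m < z)).
  move=> y z Hs; apply: H; exact: subseq_trans Hs (subseq_cons _ _).
case: (ltngtP m x) => [mx|xm'|E].
- have E1 : (x < m) = false by lia.
  by rewrite /= mx E1 /= -IH.
- have E1 : (m < x) = false by lia.
  have F : filter (fun x => m < x) l = [::].
    apply: filter_none => z zl. apply/negP => mz. have := H x z. rewrite xm' mz /=.
    by move/(_ (sub2 (mem_head _ [::]) zl)).
  by rewrite /= E1 xm' F /= {1}(IH Hm' H') F.
- by rewrite E eqxx in xm.
Qed.

Lemma map_sub_iota m k : 1 <= m ->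
  map (fun x => x - (m - 1)) (iota m k) = iota 1 k.
Proof.
move=> m1. have -> : iota m k = iota ((m - 1) + 1) k by congr iota; lia.
rewrite iotaDl -map_comp. rewrite (eq_map (g := id)) ?map_id // => x /=.
exact: addKn.
Qed.

Lemma hat_sub m (L : seq nat) : (forall x, x \in L -> m <= x) ->
  hat m (map (fun x => x - (m - 1)) L) = L.
Proof.
move=> H. rewrite /hat -map_comp. apply: map_id_in => x /H xm /=. lia.
Qed.

Lemma ar2 a : a.+1 - a = 1. Proof. lia. Qed.
Lemma ar3 a b : a < a + b.+1. Proof. lia. Qed.
Lemma ar4 a b : a + b.+1 - a = b.+1. Proof. lia. Qed.

Lemma existence n s : 3 <= n -> perm_eq s (iota 1 n) -> ~ C4 s ->
  index 1 s < index n s -> 2 <= index n s - index 1 s ->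
  exists m s1 s2,
    [/\ 2 <= m, primitive m s1, Sprec 1 (n - m + 1) s2 & s = odot s1 s2].
Proof.
move=> n3 Hp HC lt k2.
have U : uniq s by rewrite (perm_uniq Hp) iota_uniq.
have Mem : forall x, (x \in s) = (1 <= x <= n).
  by move=> x; rewrite (perm_mem Hp) mem_iota; lia.
have s1in : 1 \in s by rewrite Mem; lia.
have snin : n \in s by rewrite Mem; lia.
have [al [b [ga [Es Hk]]]] := decomp s1in snin lt.
case: b Es Hk => [|m be] Es Hk; first by rewrite Hk in k2.
rewrite /= in Es. clear Hk k2 lt s1in snin.
subst s.
set S := al ++ _ in Hp HC U Mem *.
have R1 : S = (al ++ [:: 1; m]) ++ (be ++ n :: ga) by rewrite /S -catA.
have R2 : S = (al ++ [:: 1]) ++ [:: m] ++ be ++ n :: ga by rewrite /S -catA.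
have R3 : S = (al ++ 1 :: m :: be ++ [:: n]) ++ ga by rewrite /S -!catA /= -!catA.
have R4 : S = (al ++ [:: 1; m] ++ be) ++ n :: ga by rewrite /S -!catA.
have inS : forall x, x \in S -> 1 <= x <= n by move=> x; rewrite Mem.
have neq : forall u v, subseq [:: u; v] S -> u != v.
  by move=> u v H; exact: uniq_neq H U.
have m1 : 1 != m.
  by apply: neq; rewrite R2; apply: sub2; rewrite ?(mem_cat, in_cons, eqxx, orbT, orTb).
have mn : m != n.
  by apply: neq; rewrite R1; apply: sub2; rewrite ?(mem_cat, in_cons, eqxx, orbT, orTb).
have mS : m \in S by rewrite R1 ?(mem_cat, in_cons, eqxx, orbT, orTb).
have nS : n \in S by rewrite R1 ?(mem_cat, in_cons, eqxx, orbT, orTb).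
have m2 : 2 <= m < n.
  move: (inS m mS) (inS n nS) m1 mn; lia.
clear m1 mn.
have Hbe : forall x, x \in be -> m < x < n.
  move=> x xb.
  have xS : x \in S by rewrite R1 ?(mem_cat, in_cons, xb, orbT, orTb).
  have h1 : 1 != x by apply: neq; rewrite R1; apply: sub2; rewrite ?(mem_cat, in_cons, eqxx, xb, orbT, orTb).
  have h2 : m != x by apply: neq; rewrite R1; apply: sub2; rewrite ?(mem_cat, in_cons, eqxx, xb, orbT, orTb).
  have h3 : x != n by apply: neq; rewrite R4; apply: sub2; rewrite ?(mem_cat, in_cons, eqxx, xb, orbT, orTb).
  have h4 : ~~ (x < m).
    apply/negP => xm; apply: HC; exists 1, m, x, n; split.
      by rewrite R2; apply: sub4; rewrite ?(mem_cat, in_cons, eqxx, xb, orbT, orTb).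
    have hx := inS x xS. split; lia.
  move: (inS x xS) h1 h2 h3 h4; lia.
have Hal : forall x, x \in al -> [/\ 1 <= x, x != 1, x != m & x < n].
  move=> x xa.
  have xS : x \in S by rewrite /S mem_cat xa.
  have h1 : x != 1 by apply: neq; rewrite /S; apply: sub2; rewrite ?(mem_cat, in_cons, eqxx, xa, orbT, orTb).
  have h2 : x != m by apply: neq; rewrite /S; apply: sub2; rewrite ?(mem_cat, in_cons, eqxx, xa, orbT, orTb).
  have h3 : x != n by apply: neq; rewrite /S; apply: sub2; rewrite ?(mem_cat, in_cons, eqxx, xa, orbT, orTb).
  have hx := inS x xS. split => //; lia.
have Hga : forall x, x \in ga -> [/\ 1 <= x, 1 != x, m != x & x < n].
  move=> x xa.
  have xS : x \in S by rewrite R3 mem_cat xa orbT.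
  have h1 : 1 != x by apply: neq; rewrite R3; apply: sub2; rewrite ?(mem_cat, in_cons, eqxx, xa, orbT, orTb).
  have h2 : m != x by apply: neq; rewrite R3; apply: sub2; rewrite ?(mem_cat, in_cons, eqxx, xa, orbT, orTb).
  have h3 : n != x by apply: neq; rewrite R3; apply: sub2; rewrite ?(mem_cat, in_cons, eqxx, xa, orbT, orTb).
  have hx := inS x xS. split => //; lia.
have Salh : forall y z, subseq [:: y; z] al -> ~~ ((y < m) && (m < z)).
  move=> y z H; apply/negP => /andP[ym mz]; apply: HC; exists y, z, m, n; split.
    rewrite /S (_ : [:: y; z; m; n] = [:: y; z] ++ [:: m; n]) //; apply: cat_subseq => //.
    rewrite (_ : 1 :: m :: be ++ n :: ga = [:: 1; m] ++ (be ++ n :: ga)) //; apply: sub2;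
      rewrite ?(mem_cat, in_cons, eqxx, orbT, orTb) //.
  have zal : z \in al by apply: (mem_subseq H); rewrite ?(in_cons, eqxx, orbT).
  have [_ _ _ hz] := Hal z zal. split; lia.
have Sgah : forall y z, subseq [:: y; z] ga -> ~~ ((y < m) && (m < z)).
  move=> y z H; apply/negP => /andP[ym mz]; apply: HC; exists 1, m, y, z; split.
    rewrite R1 (_ : [:: 1; m; y; z] = [:: 1; m] ++ [:: y; z]) //; apply: cat_subseq.
      exact: suffix_subseq.
    apply: subseq_trans H _; rewrite (_ : be ++ n :: ga = (be ++ [:: n]) ++ ga) ?suffix_subseq //.
    by rewrite -catA.
  have yga : y \in ga by apply: (mem_subseq H); rewrite ?(in_cons, eqxx, orbT).
  have [hy1 hy2 _ _] := Hga y yga. split; lia.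
have mal : m \notin al by apply/negP => /Hal [_ _]; rewrite eqxx.
have mga : m \notin ga by apply/negP => /Hga [_ _]; rewrite eqxx.
have Sal := split_hl mal Salh.
have Sga := split_hl mga Sgah.
have Fal : filter (fun x => x <= m) al = filter (fun x => x < m) al.
  by apply: eq_in_filter => x /Hal [_ _ h _]; lia.
have Fbe : filter (fun x => x <= m) be = [::].
  by apply: filter_none => x /Hbe; lia.
have Fga : filter (fun x => x <= m) ga = filter (fun x => x < m) ga.
  by apply: eq_in_filter => x /Hga [_ _ h _]; lia.
have Gal : filter (fun x => m <= x) al = filter (fun x => m < x) al.
  by apply: eq_in_filter => x /Hal [_ _ h _]; lia.
have Gbe : filter (fun x => m <= x) be = be.
  by apply: filter_all' => x /Hbe; lia.
have Gga : filter (fun x => m <= x) ga = filter (fun x => m < x) ga.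
  by apply: eq_in_filter => x /Hga [_ _ h _]; lia.
have b1 : (1 <= m) = true by lia.
have b2 : (m <= m) = true by lia.
have b3 : (n <= m) = false by lia.
have b4 : (m <= 1) = false by lia.
have b5 : (m <= n) = true by lia.
have E1 : filter (fun x => x <= m) S =
    filter (fun x => x < m) al ++ 1 :: m :: filter (fun x => x < m) ga.
  by rewrite /S filter_cat /= filter_cat /= Fal Fbe Fga b1 b2 b3.
have E2 : filter (fun x => m <= x) S =
    filter (fun x => m < x) al ++ m :: be ++ n :: filter (fun x => m < x) ga.
  by rewrite /S filter_cat /= filter_cat /= Gal Gbe Gga b4 b2 b5.
clear b1 b2 b3 b4 b5.
have P1 : perm_eq (filter (fun x => x <= m) S) (iota 1 m).
  apply: uniq_perm; [exact: filter_uniq | exact: iota_uniq | move=> x].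
  rewrite mem_filter Mem mem_iota; lia.
have P2 : perm_eq (filter (fun x => m <= x) S) (iota m (n - m + 1)).
  apply: uniq_perm; [exact: filter_uniq | exact: iota_uniq | move=> x].
  rewrite mem_filter Mem mem_iota; lia.
have P3 : perm_eq (map (fun x => x - (m - 1)) (filter (fun x => m <= x) S))
                  (iota 1 (n - m + 1)).
  have := perm_map (fun x => x - (m - 1)) P2. rewrite map_sub_iota //; lia.
have E3 : map (fun x => x - (m - 1)) (filter (fun x => m <= x) S) =
   map (fun x => x - (m - 1)) (filter (fun x => m < x) al) ++ 1 ::
   map (fun x => x - (m - 1)) be ++ (n - m + 1) ::
   map (fun x => x - (m - 1)) (filter (fun x => m < x) ga).
  rewrite E2 map_cat /= map_cat /=.
  have -> : m - (m - 1) = 1 by lia.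
  by have -> : n - (m - 1) = n - m + 1 by lia.
have n1al : 1 \notin filter (fun x => x < m) al.
  by rewrite mem_filter; apply/negP => /andP[_ /Hal [_ h _ _]]; rewrite eqxx in h.
have nmal : m \notin filter (fun x => x < m) al.
  by rewrite mem_filter ltnn.
have n1alh : 1 \notin map (fun x => x - (m - 1)) (filter (fun x => m < x) al).
  by apply: notin_map => y; rewrite mem_filter => /andP[h _]; clear -h m2; lia.
have nlalh : (n - m + 1) \notin map (fun x => x - (m - 1)) (filter (fun x => m < x) al).
  by apply: notin_map => y; rewrite mem_filter => /andP[h /Hal [_ _ _ h']]; clear -h h' m2; lia.
have nlbe : (n - m + 1) \notin map (fun x => x - (m - 1)) be.
  by apply: notin_map => y /Hbe h; clear -h m2; lia.
have l1 : (n - m + 1) != 1 by clear -m2; lia.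
exists m, (filter (fun x => x <= m) S),
  (map (fun x => x - (m - 1)) (filter (fun x => m <= x) S)).
split.
- by case/andP: m2.
- split.
  + split; first exact: P1.
    rewrite containsE => -[a [b [c [d [Hs Ho]]]]]; apply: HC.
    exists a, b, c, d; split => //; exact: subseq_trans Hs (filter_subseq _ _).
  + by rewrite E1 idx1 // idxm //; clear -m2; lia.
  + by rewrite E1 idx1 // idxm ?ar2 //; clear -m2; lia.
  + by move=> b hb; exfalso; clear -hb; lia.
- exists (size be).+1; split; first by []. split.
  + split; first exact: P3.
    rewrite containsE => -[a [b [c [d [Hs Ho]]]]]; apply: HC.
    have [v [Hv Ev]] := subseq_map_inv Hs.
    have Sub := mem_subseq Hv.
    case: v Hv Ev Sub => [|a' [|b' [|c' [|d' [|? ?]]]]] //= Hv [Ea Eb Ec Ed] Sub.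
    have ha : m <= a' by move: (Sub a'); rewrite mem_filter ?(in_cons, eqxx, orTb) => /(_ isT)/andP[].
    have hb : m <= b' by move: (Sub b'); rewrite mem_filter ?(in_cons, eqxx, orTb, orbT) => /(_ isT)/andP[].
    have hc : m <= c' by move: (Sub c'); rewrite mem_filter ?(in_cons, eqxx, orTb, orbT) => /(_ isT)/andP[].
    have hd : m <= d' by move: (Sub d'); rewrite mem_filter ?(in_cons, eqxx, orTb, orbT) => /(_ isT)/andP[].
    exists a', b', c', d'; split; first exact: subseq_trans Hv (filter_subseq _ _).
    case: Ho; rewrite Ea Eb Ec Ed => h1 h2 h3; clear -ha hb hc hd h1 h2 h3 m2; split; lia.
  + by rewrite E3 idx1 // idxl // ar3.
  + by rewrite E3 idx1 // idxl // ar4 size_map.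
  + by move=> b hb; exfalso; clear -hb; lia.
- have Sz1 : size (filter (fun x => x < m) al ++ 1 :: m :: filter (fun x => x < m) ga) = m.
    by rewrite -E1 (perm_size P1) size_iota.
  have Sz2 := perm_size P3. rewrite E3 size_iota in Sz2.
  rewrite E1 E3 odot_explicit //.
  rewrite !hat_sub; first last.
  + by move=> x; rewrite mem_filter => /andP[h _]; clear -h; lia.
  + by move=> x /Hbe h; clear -h; lia.
  + by move=> x; rewrite mem_filter => /andP[h _]; clear -h; lia.
  have -> : n - m + 1 + m - 1 = n by clear -m2; lia.
  rewrite /S {1}Sal {1}Sga. by rewrite -!catA.
Qed.

Lemma nth_after (P R : seq nat) m : nth 0 (P ++ 1 :: m :: R) (size P).+1 = m.
Proof. by rewrite nth_cat ltnNge leqnSn /= subSnn. Qed.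

Lemma sub_hat m (L : seq nat) :
  map (fun x => x - (m - 1)) (hat m L) = L.
Proof.
rewrite /hat -map_comp. apply: map_id_in => x _ /=. exact: addnK.
Qed.

Lemma charac n m s1 s2 s : 2 <= m -> primitive m s1 -> Sprec 1 (n - m + 1) s2 ->
  s = odot s1 s2 ->
  [/\ m = nth 0 s (index 1 s).+1, s1 = filter (fun x => x <= m) s &
      s2 = map (fun x => x - (m - 1)) (filter (fun x => m <= x) s)].
Proof.
move=> m2 [[Hp1 HC1] i1 d1 _] [k [k1 [[Hp2 HC2] i2 d2 _]]] Es.
move: Hp2 i2 d2 HC2 Es; set l := n - m + 1 => Hp2 i2 d2 HC2 Es.
have U1 : uniq s1 by rewrite (perm_uniq Hp1) iota_uniq.
have U2 : uniq s2 by rewrite (perm_uniq Hp2) iota_uniq.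
have Mem1 : forall x, (x \in s1) = (1 <= x <= m).
  by move=> x; rewrite (perm_mem Hp1) mem_iota; lia.
have Mem2 : forall x, (x \in s2) = (1 <= x <= l).
  by move=> x; rewrite (perm_mem Hp2) mem_iota; lia.
have Sz1 : size s1 = m by rewrite (perm_size Hp1) size_iota.
have Sz2 : size s2 = l by rewrite (perm_size Hp2) size_iota.
have l1 : 1 <= l.
  case: (posnP l) => // l0. move: Sz2; rewrite l0 => /size0nil E.
  by move: i2; rewrite E.
have s11 : 1 \in s1 by rewrite Mem1; clear -m2; lia.
have s1m : m \in s1 by rewrite Mem1; clear -m2; lia.
have s21 : 1 \in s2 by rewrite Mem2; clear -l1; lia.
have s2l : l \in s2 by rewrite Mem2; clear -l1; lia.
have [a [b [c [E1 D1]]]] := decomp s11 s1m i1.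
have [b2 [th [t [E2 D2]]]] := decomp s21 s2l i2.
case: b E1 D1 => [|? ?] E1 D1; last by rewrite d1 in D1.
rewrite /= in E1. clear D1 d1 i1 i2 d2 D2 k k1.
have n1a : 1 \notin a by apply: (@notin_pre a (m :: c)); rewrite -E1.
have U2' : uniq ((b2 ++ 1 :: th) ++ l :: t) by rewrite -catA /= -E2.
have := notin_pre U2'. rewrite mem_cat in_cons !negb_or => /and3P[nlb2 l1' nlth].
have n1b2 : 1 \notin b2 by apply: (@notin_pre b2 (th ++ l :: t)); rewrite -E2.
have neq1 : forall u v, subseq [:: u; v] s1 -> u != v by move=> u v H; exact: uniq_neq H U1.
have neq2 : forall u v, subseq [:: u; v] s2 -> u != v by move=> u v H; exact: uniq_neq H U2.
have Ha : forall x, x \in a -> x < m.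
  move=> x xa. have xs : x \in s1 by rewrite E1 mem_cat xa.
  have h : x != m by apply: neq1; rewrite E1; apply: sub2; rewrite ?(in_cons, eqxx, orbT).
  move: xs; rewrite Mem1 => xs. clear -xs h; lia.
have Hc : forall x, x \in c -> x < m.
  move=> x xa. have xs : x \in s1 by rewrite E1 mem_cat !in_cons xa !orbT.
  have h : m != x.
    apply: neq1; rewrite E1 (_ : a ++ [:: 1, m & c] = (a ++ [:: 1; m]) ++ c) ?sub2 //;
      rewrite ?(mem_cat, in_cons, eqxx, orbT) //. by rewrite -catA.
  move: xs; rewrite Mem1 => xs. clear -xs h; lia.
have Hb2 : forall x, x \in b2 -> 2 <= x.
  move=> x xa. have xs : x \in s2 by rewrite E2 mem_cat xa.
  have h : x != 1 by apply: neq2; rewrite E2; apply: sub2; rewrite ?(in_cons, eqxx, orbT).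
  move: xs; rewrite Mem2 => xs. clear -xs h; lia.
have E2' : s2 = (b2 ++ [:: 1]) ++ (th ++ l :: t) by rewrite E2 -catA.
have Hth : forall x, x \in th -> 2 <= x.
  move=> x xa. have xs : x \in s2 by rewrite E2' ?(mem_cat, in_cons, xa, orbT, orTb).
  have h : 1 != x by apply: neq2; rewrite E2'; apply: sub2; rewrite ?(mem_cat, in_cons, eqxx, xa, orbT).
  move: xs; rewrite Mem2 => xs. clear -xs h; lia.
have Ht : forall x, x \in t -> 2 <= x.
  move=> x xa. have xs : x \in s2 by rewrite E2' ?(mem_cat, in_cons, xa, orbT, orTb).
  have h : 1 != x by apply: neq2; rewrite E2'; apply: sub2; rewrite ?(mem_cat, in_cons, eqxx, xa, orbT).
  move: xs; rewrite Mem2 => xs. clear -xs h; lia.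
have l2 : 2 <= l by clear -l1 l1'; lia.
have Es' : s = hat m b2 ++ a ++ [:: 1; m] ++ hat m th ++ [:: l + m - 1] ++ hat m t ++ c.
  by rewrite Es E1 E2 odot_explicit // -?E1 -?E2.
have F1 : filter (fun x => x <= m) (hat m b2) = [::].
  by rewrite /hat; apply: filter_map_none => y /Hb2 h; clear -h m2; lia.
have F2 : filter (fun x => x <= m) a = a.
  by apply: filter_all' => y /Ha h; clear -h; lia.
have F3 : filter (fun x => x <= m) (hat m th) = [::].
  by rewrite /hat; apply: filter_map_none => y /Hth h; clear -h m2; lia.
have F4 : filter (fun x => x <= m) (hat m t) = [::].
  by rewrite /hat; apply: filter_map_none => y /Ht h; clear -h m2; lia.
have F5 : filter (fun x => x <= m) c = c.
  by apply: filter_all' => y /Hc h; clear -h; lia.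
have G1 : filter (fun x => m <= x) (hat m b2) = hat m b2.
  by rewrite /hat; apply: filter_map_all => y /Hb2 h; clear -h m2; lia.
have G2 : filter (fun x => m <= x) a = [::].
  by apply: filter_none => y /Ha h; clear -h; lia.
have G3 : filter (fun x => m <= x) (hat m th) = hat m th.
  by rewrite /hat; apply: filter_map_all => y /Hth h; clear -h m2; lia.
have G4 : filter (fun x => m <= x) (hat m t) = hat m t.
  by rewrite /hat; apply: filter_map_all => y /Ht h; clear -h m2; lia.
have G5 : filter (fun x => m <= x) c = [::].
  by apply: filter_none => y /Hc h; clear -h; lia.
have b1 : (1 <= m) = true by clear -m2; lia.
have b2' : (m <= m) = true by clear -m2; lia.
have b3 : (l + m - 1 <= m) = false by clear -m2 l2; lia.
have b4 : (m <= 1) = false by clear -m2; lia.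
have b5 : (m <= l + m - 1) = true by clear -m2 l2; lia.
have e1 : m - (m - 1) = 1 by clear -m2; lia.
have e2 : l + m - 1 - (m - 1) = l by clear -m2 l2; lia.
have n1p : 1 \notin hat m b2 ++ a.
  rewrite mem_cat negb_or n1a andbT /hat. apply: notin_map => y /Hb2 h; clear -h m2; lia.
split.
- by rewrite Es' (catA (hat m b2) a) !cat_cons cat0s idx1 // nth_after.
- by rewrite E1 Es' !filter_cat F1 F2 F3 F4 F5 /= b1 b2' b3.
- rewrite E2 Es' !filter_cat G1 G2 G3 G4 G5 /= b4 b2' b5 /= !map_cat !sub_hat /=.
  by rewrite e1 map_cat /= map_cat /= !sub_hat e2 cats0.
Qed.

Theorem mainTheorem3 (n : nat) (s : seq nat) :
  3 <= n -> Sprec 1 n s -> ~ primitive n s ->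
  (exists m s1 s2,
     [/\ 2 <= m, primitive m s1, Sprec 1 (n - m + 1) s2 & s = odot s1 s2])
  /\
  (forall m s1 s2 m' s1' s2',
     [/\ 2 <= m, primitive m s1, Sprec 1 (n - m + 1) s2 & s = odot s1 s2] ->
     [/\ 2 <= m', primitive m' s1', Sprec 1 (n - m' + 1) s2' & s = odot s1' s2'] ->
     [/\ m = m', s1 = s1' & s2 = s2']).
Proof.
move=> n3 [k [k1 Hk]] Hnp.
have k2 : 2 <= k.
  have kn1 : k != 1 by apply/eqP => E; apply: Hnp; move: Hk; rewrite E.
  clear -k1 kn1; lia.
case: Hk => [[Hp HC] i d _].
split.
- apply: existence => //; last by rewrite d.
  by move=> C; apply: HC; apply/containsE.
- move=> m s1 s2 m' s1' s2' [h1 h2 h3 h4] [h1' h2' h3' h4'].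
  have [e1 e2 e3] := charac h1 h2 h3 h4.
  have [e1' e2' e3'] := charac h1' h2' h3' h4'.
  have em : m = m' by rewrite e1 e1'.
  subst m'. split => //; [by rewrite e2 e2' -e1 | by rewrite e3 e3' -e1].
Qed.
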